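(* Let $A$ be a finite skew brace, $k$ a field, $I$ an ideal of $A$, and $(V,\beta,\rho)$ an irreducible representation of $A$ over $k$. Then the restriction $(V,\beta|_I,\rho|_I)$, a representation of the skew brace $I$, is completely reducible. Write $V=W_1\oplus\cdots\oplus W_r$, where $S_1,\dots,S_r$ are pairwise non-equivalent irreducible representations of $I$ and $W_i$ (the homogeneous component of type $S_i$) is the sum of all irreducible $I$-subrepresentations of $V$ equivalent to $S_i$, with $W_i\cong S_i^{\oplus m_i}$. Then: (a) for each $g\in\Lambda_A$, $\varphi_{(\beta,\rho)}(g)$ maps each $W_i$ onto some $W_j$, and the resulting action of $\Lambda_A$ on $\{W_1,\dots,W_r\}$ is transitive; (b) $m_1=\cdots=m_r$ and $\dim_k S_1=\cdots=\dim_k S_r$.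
   Context: A skew brace is a set $A$ with two group operations $\cdot$ and $\circ$ such that $a\circ(b\cdot c)=(a\circ b)\cdot a^{-1}\cdot(a\circ c)$ for all $a,b,c\in A$; here $a^{-1}$ is the inverse in $(A,\cdot)$. For $a\in A$ let $\lambda_a(b)=a^{-1}\cdot(a\circ b)$ and $\lambda^{\mathrm{op}}_a(b)=(a\circ b)\cdot a^{-1}$. Let $\Lambda_A$ be the group on $A\times A$ with multiplication $(a,b)(c,d)=(a\cdot\lambda^{\mathrm{op}}_b(c),\,b\circ d)$. A representation of $A$ over $k$ is a triple $(V,\beta,\rho)$ with $V$ a $k$-vector space, $\beta:(A,\cdot)\to\mathrm{GL}(V)$, $\rho:(A,\circ)\to\mathrm{GL}(V)$ group homomorphisms such that $\beta(\lambda^{\mathrm{op}}_a(b))=\rho(a)\beta(b)\rho(a)^{-1}$ for all $a,b\in A$; it gives $\varphi_{(\beta,\rho)}:\Lambda_A\to\mathrm{GL}(V)$, $(a,b)\mapsto\beta(a)\rho(b)$. A subrepresentation is a subspace invariant under all $\beta(a),\rho(b)$; irreducible means $V\neq0$ with no subrepresentations other than $0,V$; completely reducible means a direct sum of irreducible subrepresentations. Two representations $(V_1,\beta_1,\rho_1),(V_2,\beta_2,\rho_2)$ are equivalent if there is a linear isomorphism $T:V_1\to V_2$ with $T\beta_1(a)=\beta_2(a)T$ and $T\rho_1(a)=\rho_2(a)T$ for all $a$. An ideal of $A$ is a subset $I$ that is a normal subgroup of both $(A,\cdot)$ and $(A,\circ)$ with $\lambda_a(I)\subseteq I$ for all $a\in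 A$; then $(I,\cdot,\circ)$ is a skew brace. *)

(* Defs.v *)
From mathcomp Require Import all_boot all_order all_algebra.
Set Implicit Arguments. Unset Strict Implicit. Unset Printing Implicit Defensive.
Import GRing.Theory.
Local Open Scope ring_scope.

Record skew_brace (T : finType) := SkewBrace {
  dot : T -> T -> T; dinv : T -> T; done : T;
  circ : T -> T -> T; cinv : T -> T; cone : T;
  dotA : forall a b c, dot a (dot b c) = dot (dot a b) c;
  dot1l : forall a, dot done a = a;
  dot1r : forall a, dot a done = a;
  dotVl : forall a, dot (dinv a) a = done;
  dotVr : forall a, dot a (dinv a) = done;
  circA : forall a b c, circ a (circ b c) = circ (circ a b) c;
  circ1l : forall a, circ cone a = a;
  circ1r : forall a, circ a cone = a;
  circVl : forall a, circ (cinv a) a = cone;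
  circVr : forall a, circ a (cinv a) = cone;
  brace_law : forall a b c,
    circ a (dot b c) = dot (dot (circ a b) (dinv a)) (circ a c)
}.

Section SkewBraceDefs.
Variables (T : finType) (B : skew_brace T).

Definition lam (a b : T) : T := dot B (dinv B a) (circ B a b).
Definition lamop (a b : T) : T := dot B (circ B a b) (dinv B a).

Definition is_ideal (I : {set T}) : Prop :=
  [/\ done B \in I,
      (forall x y, x \in I -> y \in I -> dot B x y \in I),
      (forall x, x \in I -> dinv B x \in I) &
      (forall a x, x \in I -> dot B (dot B a x) (dinv B a) \in I)] /\
  [/\ cone B \in I,
      (forall x y, x \in I -> y \in I -> circ B x y \in I),
      (forall x, x \in I -> cinv B x \in I) &
      (forall a x, x \in I -> circ B (circ B a x) (cinv B a) \in I)] /\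
  (forall a x, x \in I -> lam a x \in I).

Variable k : fieldType.

(* (V, beta, rho) is a representation of the sub-skew-brace (D, ., o) of B
   (D = [set: T] for B itself, D = I for an ideal I); values of beta, rho
   outside D are irrelevant. *)
Definition is_rep (D : {set T}) (V : vectType k) (beta rho : T -> 'End(V)) : Prop :=
  [/\ (forall a b, a \in D -> b \in D -> beta (dot B a b) = (beta a \o beta b)%VF),
      (forall a b, a \in D -> b \in D -> rho (circ B a b) = (rho a \o rho b)%VF),
      (forall a, a \in D -> lker (beta a) = 0%VS /\ limg (beta a) = fullv),
      (forall a, a \in D -> lker (rho a) = 0%VS /\ limg (rho a) = fullv) &
      (forall a b, a \in D -> b \in D ->
         beta (lamop a b) = (rho a \o beta b \o (rho a)^-1)%VF)].

Definition is_subrep (D : {set T}) (V : vectType k) (beta rho : T -> 'End(V))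
  (U : {vspace V}) : Prop :=
  forall a, a \in D -> ((beta a @: U)%VS <= U)%VS /\ ((rho a @: U)%VS <= U)%VS.

Definition is_irreducible (D : {set T}) (V : vectType k) (beta rho : T -> 'End(V)) : Prop :=
  (fullv : {vspace V}) <> 0%VS /\
  forall U : {vspace V}, is_subrep D beta rho U -> U = 0%VS \/ U = fullv.

Definition is_irr_subrep (D : {set T}) (V : vectType k) (beta rho : T -> 'End(V))
  (U : {vspace V}) : Prop :=
  [/\ U <> 0%VS, is_subrep D beta rho U &
      forall U', is_subrep D beta rho U' -> (U' <= U)%VS -> U' = 0%VS \/ U' = U].

Definition completely_reducible (D : {set T}) (V : vectType k) (beta rho : T -> 'End(V)) : Prop :=
  exists (s : nat) (U : 'I_s -> {vspace V}),
    [/\ forall j, is_irr_subrep D beta rho (U j),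
        directv (\sum_(j < s) U j) & (\sum_(j < s) U j)%VS = fullv].

Definition rep_equiv (D : {set T}) (V1 V2 : vectType k)
  (b1 r1 : T -> 'End(V1)) (b2 r2 : T -> 'End(V2)) : Prop :=
  exists f : 'Hom(V1, V2),
    [/\ lker f = 0%VS, limg f = fullv,
        (forall a, a \in D -> (f \o b1 a)%VF = (b2 a \o f)%VF) &
        (forall a, a \in D -> (f \o r1 a)%VF = (r2 a \o f)%VF)].

Definition intertwining_emb (D : {set T}) (S V : vectType k)
  (bS rS : T -> 'End(S)) (b r : T -> 'End(V)) (f : 'Hom(S, V)) : Prop :=
  [/\ lker f = 0%VS,
      (forall a, a \in D -> (f \o bS a)%VF = (b a \o f)%VF) &
      (forall a, a \in D -> (f \o rS a)%VF = (r a \o f)%VF)].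

Definition subrep_equiv (D : {set T}) (V S : vectType k)
  (b r : T -> 'End(V)) (bS rS : T -> 'End(S)) (U : {vspace V}) : Prop :=
  exists f : 'Hom(S, V), intertwining_emb D bS rS b r f /\ limg f = U.

(* W is the sum of all irreducible subrepresentations of V equivalent to S
   (in finite dimension: W contains each of them and is a finite sum of them) *)
Definition is_homog_component (D : {set T}) (V S : vectType k)
  (b r : T -> 'End(V)) (bS rS : T -> 'End(S)) (W : {vspace V}) : Prop :=
  (forall U, is_irr_subrep D b r U -> subrep_equiv D b r bS rS U -> (U <= W)%VS) /\
  exists (t : nat) (X : 'I_t -> {vspace V}),
    (forall j, is_irr_subrep D b r (X j) /\ subrep_equiv D b r bS rS (X j)) /\
    W = (\sum_(j < t) X j)%VS.

(* W is equivalent (as a representation of D) to S^{(+) m}: W is the direct sum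
   of the images of m injective intertwiners S -> V *)
Definition is_multiple (D : {set T}) (V S : vectType k)
  (b r : T -> 'End(V)) (bS rS : T -> 'End(S)) (W : {vspace V}) (m : nat) : Prop :=
  exists f : 'I_m -> 'Hom(S, V),
    [/\ forall j, intertwining_emb D bS rS b r (f j),
        directv (\sum_(j < m) limg (f j)) & (\sum_(j < m) limg (f j))%VS = W].

Definition phi (V : vectType k) (beta rho : T -> 'End(V)) (g : T * T) : 'End(V) :=
  (beta g.1 \o rho g.2)%VF.

End SkewBraceDefs.

(* Main.v *)
Require Import Defs.
From mathcomp Require Import all_boot all_order all_algebra.
From Stdlib Require Import Classical.
Set Implicit Arguments. Unset Strict Implicit. Unset Printing Implicit Defensive.
Import GRing.Theory.
Local Open Scope ring_scope.

Section Group.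
Variables (T : finType) (B : skew_brace T).
Local Notation "a * b" := (dot B a b).
Local Notation "a ** b" := (circ B a b) (at level 40).

Lemma dinvK a : dinv B (dinv B a) = a.
Proof.
by rewrite -[RHS](dot1l B) -(dotVl B (dinv B a)) -dotA dotVl dot1r.
Qed.

Lemma cinvK a : cinv B (cinv B a) = a.
Proof.
by rewrite -[RHS](circ1l B) -(circVl B (cinv B a)) -circA circVl circ1r.
Qed.
End Group.

Section Basics.
Variables (T : finType) (B : skew_brace T) (k : fieldType).
Variables (V : vectType k) (beta rho : T -> 'End(V)).
Hypothesis Hrep : is_rep B [set: T] beta rho.

Lemma bD a b : beta (dot B a b) = (beta a \o beta b)%VF.
Proof. by case: Hrep => h _ _ _ _; apply: h; rewrite in_setT. Qed.
Lemma rD a b : rho (circ B a b) = (rho a \o rho b)%VF.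
Proof. by case: Hrep => _ h _ _ _; apply: h; rewrite in_setT. Qed.
Lemma bker a : lker (beta a) = 0%VS.
Proof. by case: Hrep => _ _ h _ _; case: (h a); rewrite ?in_setT. Qed.
Lemma bimg a : limg (beta a) = fullv.
Proof. by case: Hrep => _ _ h _ _; case: (h a); rewrite ?in_setT. Qed.
Lemma rker a : lker (rho a) = 0%VS.
Proof. by case: Hrep => _ _ _ h _; case: (h a); rewrite ?in_setT. Qed.
Lemma rimg a : limg (rho a) = fullv.
Proof. by case: Hrep => _ _ _ h _; case: (h a); rewrite ?in_setT. Qed.

Lemma idem1 (f : 'End(V)) : limg f = fullv -> (f \o f = f)%VF -> f = \1%VF.
Proof.
move=> im ff; apply/lfunP => v.
have : v \in limg f by rewrite im memvf.
move/limg_lfunVK => <-.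
by rewrite id_lfunE -comp_lfunE ff.
Qed.

Lemma b1 : beta (done B) = \1%VF.
Proof. by apply: idem1; rewrite ?bimg // -bD dot1l. Qed.
Lemma r1 : rho (cone B) = \1%VF.
Proof. by apply: idem1; rewrite ?rimg // -rD circ1l. Qed.

Lemma rb a b : (rho a \o beta b = beta (lamop B a b) \o rho a)%VF.
Proof.
case: Hrep => _ _ _ _ h; rewrite h ?in_setT //.
by rewrite -!comp_lfunA lker0_compVf ?rker // comp_lfun1r.
Qed.

Lemma bVl a : (beta (dinv B a) \o beta a = \1)%VF.
Proof. by rewrite -bD dotVl b1. Qed.
Lemma bVr a : (beta a \o beta (dinv B a) = \1)%VF.
Proof. by rewrite -bD dotVr b1. Qed.
Lemma rVl a : (rho (cinv B a) \o rho a = \1)%VF.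
Proof. by rewrite -rD circVl r1. Qed.
Lemma rVr a : (rho a \o rho (cinv B a) = \1)%VF.
Proof. by rewrite -rD circVr r1. Qed.
End Basics.

Section Ideal.
Variables (T : finType) (B : skew_brace T) (I : {set T}).
Hypothesis HI : is_ideal B I.

Lemma idM x y : x \in I -> y \in I -> dot B x y \in I.
Proof. by case: HI => [[_ h _ _] _]; apply: h. Qed.
Lemma idV x : x \in I -> dinv B x \in I.
Proof. by case: HI => [[_ _ h _] _]; apply: h. Qed.
Lemma idJ a x : x \in I -> dot B (dot B a x) (dinv B a) \in I.
Proof. by case: HI => [[_ _ _ h] _]; apply: h. Qed.
Lemma idCJ a x : x \in I -> circ B (circ B a x) (cinv B a) \in I.
Proof. by case: HI => [_ [[_ _ _ h] _]]; apply: h. Qed.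
Lemma idL a x : x \in I -> lam B a x \in I.
Proof. by case: HI => [_ [_ h]]; apply: h. Qed.

Lemma idJ' a x : x \in I -> dot B (dinv B a) (dot B x a) \in I.
Proof. by move=> /(idJ (dinv B a)); rewrite dinvK dotA. Qed.
Lemma idCJ' b x : x \in I -> circ B (circ B (cinv B b) x) b \in I.
Proof. by move=> /(idCJ (cinv B b)); rewrite cinvK. Qed.

Lemma dot_lam a y : dot B a (lam B a y) = circ B a y.
Proof. by rewrite /lam dotA dotVr dot1l. Qed.

Lemma idM2 a x : x \in I -> dot B (dinv B a) (lamop B x a) \in I.
Proof.
move=> xI; set y := circ B (circ B (cinv B a) x) a.
have yI : y \in I by apply: idCJ'.
rewrite /lamop.
have -> : circ B x a = dot B a (lam B a y).
  by rewrite dot_lam /y !circA circVr circ1l.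
rewrite dotA dotA dotVl dot1l.
by apply: idM; [apply: idL | apply: idV].
Qed.

Lemma idM3 b x : x \in I -> lamop B (cinv B b) x \in I.
Proof.
move=> xI; rewrite /lamop -dot_lam.
by apply: idJ; apply: idL.
Qed.
End Ideal.

Definition nop (T : Type) (k : fieldType) (W : vectType k) (bt rt : T -> 'End(W)) (d : bool * T) :=
  if d.1 then bt d.2 else rt d.2.
Definition iop (T : Type) (k : fieldType) (W : vectType k) (bt rt : T -> 'End(W)) (l : seq (bool * T)) :=
  foldr (fun d M => (nop bt rt d \o M)%VF) \1%VF l.
Definition inI (T : finType) (I : {set T}) (l : seq (bool * T)) := all (fun d => d.2 \in I) l.

Lemma iop_cat (T : Type) (k : fieldType) (W : vectType k) (bt rt : T -> 'End(W)) l1 l2 :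
  iop bt rt (l1 ++ l2) = (iop bt rt l1 \o iop bt rt l2)%VF.
Proof.
elim: l1 => [|d l1 IH] /=; first by rewrite comp_lfun1l.
by rewrite IH comp_lfunA.
Qed.

Lemma inI_cat (T : finType) (I : {set T}) l1 l2 : inI I (l1 ++ l2) = inI I l1 && inI I l2.
Proof. by rewrite /inI all_cat. Qed.

Lemma intw_iop (T : finType) (k : fieldType) (I : {set T}) (S V : vectType k)
  (bS rS : T -> 'End(S)) (b r : T -> 'End(V)) (f : 'Hom(S, V)) :
  (forall a, a \in I -> (f \o bS a)%VF = (b a \o f)%VF) ->
  (forall a, a \in I -> (f \o rS a)%VF = (r a \o f)%VF) ->
  forall l, inI I l -> (f \o iop bS rS l = iop b r l \o f)%VF.
Proof.
move=> hb hr; elim=> [|[[] a] l IH] /=; first by rewrite comp_lfun1l comp_lfun1r.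
- case/andP => /= aI lI; rewrite /nop /= comp_lfunA hb // -comp_lfunA IH //.
  by rewrite comp_lfunA.
- case/andP => /= aI lI; rewrite /nop /= comp_lfunA hr // -comp_lfunA IH //.
  by rewrite comp_lfunA.
Qed.

Lemma subrep_iop (T : finType) (k : fieldType) (I : {set T}) (V : vectType k)
  (b r : T -> 'End(V)) U :
  is_subrep I b r U <-> (forall l, inI I l -> (iop b r l @: U <= U)%VS).
Proof.
split.
- move=> hU; elim=> [|[[] a] l IH] /=; first by rewrite lim1g.
  + case/andP => /= aI lI; rewrite /nop /= limg_comp.
    apply: subv_trans (limgS _ (IH lI)) _; by case: (hU a aI).
  + case/andP => /= aI lI; rewrite /nop /= limg_comp.
    apply: subv_trans (limgS _ (IH lI)) _; by case: (hU a aI).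
- move=> h a aI; split.
  + by have := h [:: (true, a)]; rewrite /= aI /nop /= comp_lfun1r; apply.
  + by have := h [:: (false, a)]; rewrite /= aI /nop /= comp_lfun1r; apply.
Qed.

Section Comm.
Variables (T : finType) (B : skew_brace T) (I : {set T}) (k : fieldType).
Hypothesis HI : is_ideal B I.
Variables (V : vectType k) (beta rho : T -> 'End(V)).
Hypothesis Hrep : is_rep B [set: T] beta rho.

Local Notation iopV := (iop beta rho).

Definition SComm (h : 'End(V)) := forall d, d.2 \in I ->
  exists2 l, inI I l & (nop beta rho d \o h = h \o iopV l)%VF.
Definition Comm (h : 'End(V)) := forall l, inI I l ->
  exists2 l', inI I l' & (iopV l \o h = h \o iopV l')%VF.

Lemma SComm_Comm h : SComm h -> Comm h.
Proof.
move=> hS; elim=> [|d l IH] /=.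
  by move=> _; exists [::]; rewrite //= comp_lfun1l comp_lfun1r.
case/andP => dI lI; have [l1 l1I e1] := IH lI.
have [l2 l2I e2] := hS d dI.
exists (l2 ++ l1); first by rewrite inI_cat l2I.
by rewrite -comp_lfunA e1 comp_lfunA e2 iop_cat comp_lfunA.
Qed.

Lemma Comm_comp h1 h2 : Comm h1 -> Comm h2 -> Comm (h1 \o h2)%VF.
Proof.
move=> c1 c2 l lI; have [l1 l1I e1] := c1 l lI; have [l2 l2I e2] := c2 l1 l1I.
by exists l2 => //; rewrite comp_lfunA e1 -comp_lfunA e2 comp_lfunA.
Qed.

Lemma SComm_beta a : SComm (beta a).
Proof.
move=> [[] x] /= xI; rewrite /nop /=.
- exists [:: (true, dot B (dinv B a) (dot B x a))]; first by rewrite /inI /= idJ'.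
  by rewrite /iop /= /nop /= comp_lfun1r -!(bD Hrep) dotA dotVr dot1l.
- exists [:: (true, dot B (dinv B a) (lamop B x a)); (false, x)].
    by rewrite /inI /= idM2 ?xI.
  rewrite /iop /= /nop /= comp_lfun1r (rb Hrep) comp_lfunA -(bD Hrep).
  by rewrite dotA dotVr dot1l.
Qed.

Lemma SComm_rho b : SComm (rho b).
Proof.
move=> [[] x] /= xI; rewrite /nop /=.
- exists [:: (true, lamop B (cinv B b) x)]; first by rewrite /inI /= idM3.
  rewrite /iop /= /nop /= comp_lfun1r.
  set L := lamop B (cinv B b) x.
  transitivity (rho b \o (beta L \o rho (cinv B b)) \o rho b)%VF; last first.
    by rewrite -!comp_lfunA (rVl Hrep) comp_lfun1r.
  by rewrite -(rb Hrep) !comp_lfunA (rVr Hrep) comp_lfun1l.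
- exists [:: (false, circ B (circ B (cinv B b) x) b)]; first by rewrite /inI /= idCJ'.
  by rewrite /iop /= /nop /= comp_lfun1r -!(rD Hrep) !circA circVr circ1l.
Qed.

Lemma Comm_phi g : Comm (phi beta rho g).
Proof. by apply: Comm_comp; apply: SComm_Comm; [apply: SComm_beta|apply: SComm_rho]. Qed.

Definition phiV (g : T * T) : 'End(V) := (rho (cinv B g.2) \o beta (dinv B g.1))%VF.

Lemma Comm_phiV g : Comm (phiV g).
Proof. by apply: Comm_comp; apply: SComm_Comm; [apply: SComm_rho|apply: SComm_beta]. Qed.

Lemma phiVK g : (phiV g \o phi beta rho g = \1)%VF.
Proof.
rewrite /phiV /phi -comp_lfunA (comp_lfunA (beta _)) (bVl Hrep) comp_lfun1l.
exact: (rVl Hrep).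
Qed.
Lemma phiKV g : (phi beta rho g \o phiV g = \1)%VF.
Proof.
rewrite /phiV /phi -comp_lfunA (comp_lfunA (rho _)) (rVr Hrep) comp_lfun1l.
exact: (bVr Hrep).
Qed.
End Comm.

Section Sub.
Variables (T : finType) (I : {set T}) (k : fieldType).
Variables (V : vectType k) (beta rho : T -> 'End(V)).
Local Notation sub := (is_subrep I beta rho).
Local Notation irr := (is_irr_subrep I beta rho).
Local Notation iopV := (iop beta rho).

Lemma sub0 : sub 0%VS.
Proof. by move=> a _; rewrite !limg0 !subvv. Qed.

Lemma subD U W : sub U -> sub W -> sub (U + W)%VS.
Proof.
move=> hU hW a aI; case: (hU a aI) => u1 u2; case: (hW a aI) => w1 w2.
by rewrite !limgD; split; apply: addvS.
Qed.

Lemma sub_sum (J : Type) (r : seq J) (P : pred J) (F : J -> {vspace V}) :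
  (forall i, P i -> sub (F i)) -> sub (\sum_(i <- r | P i) F i)%VS.
Proof.
by move=> h; apply: (big_ind sub) => //; [apply: sub0 | apply: subD].
Qed.

Lemma subI U W : sub U -> sub W -> sub (U :&: W)%VS.
Proof.
move=> hU hW a aI; case: (hU a aI) => u1 u2; case: (hW a aI) => w1 w2.
split; apply: subv_trans (limg_cap _ _ _) _; exact: capvS.
Qed.

Lemma sub_img (S : vectType k) (bS rS : T -> 'End(S)) (f : 'Hom(S, V)) :
  (forall a, a \in I -> (f \o bS a)%VF = (beta a \o f)%VF) ->
  (forall a, a \in I -> (f \o rS a)%VF = (rho a \o f)%VF) ->
  sub (limg f).
Proof.
move=> hb hr a aI; rewrite -!limg_comp -hb // -hr // !limg_comp.
by split; apply: limgS; apply: subvf.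
Qed.


Lemma irr_sub U : irr U -> sub U.
Proof. by case. Qed.

Lemma irr_cap U W : irr U -> sub W -> (U :&: W = 0)%VS \/ (U <= W)%VS.
Proof.
move=> iU sW; case: (iU) => _ sU h.
case: (h (U :&: W)%VS) => [||->|e]; [exact: subI|exact: capvSl|by left|].
by right; rewrite -e capvSr.
Qed.

Lemma irr_neq0 U : irr U -> (U != 0)%VS.
Proof. by case=> h _ _; apply/eqP. Qed.

Lemma minimal n : forall Z, (\dim Z <= n)%N -> sub Z -> (Z != 0)%VS ->
  exists U, irr U /\ (U <= Z)%VS.
Proof.
elim: n => [|n IH] Z dZ sZ nZ.
  by move: nZ; rewrite -dimv_eq0; move: dZ; rewrite leqn0 => ->.
case: (classic (exists U', [/\ sub U', (U' <= Z)%VS, U' <> 0%VS & U' <> Z])).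
  move=> [U' [sU' U'Z nU' nU'Z]].
  have lt : (\dim U' < \dim Z)%N.
    rewrite ltn_neqAle dimvS // andbT.
    apply/negP => /eqP e; apply: nU'Z; apply/eqP.
    by rewrite -(dimv_leqif_eq U'Z) e.
  have d' : (\dim U' <= n)%N by rewrite -ltnS (leq_trans lt).
  have [U [iU UU']] := IH U' d' sU' (introN eqP nU').
  by exists U; split => //; apply: subv_trans UU' U'Z.
move=> hn; exists Z; split => //; split => //; first by apply/eqP.
move=> U' sU' U'Z.
case: (classic (U' = 0%VS)) => [|n0]; first by left.
case: (classic (U' = Z)) => [|n1]; first by right.
by exfalso; apply: hn; exists U'.
Qed.

Lemma minimal' Z : sub Z -> (Z != 0)%VS -> exists U, irr U /\ (U <= Z)%VS.
Proof. exact: (@minimal (\dim Z)). Qed.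

Variable (h h' : 'End(V)).
Hypotheses (ch : Comm I beta rho h) (ch' : Comm I beta rho h').
Hypotheses (hK : (h' \o h = \1)%VF) (hK' : (h \o h' = \1)%VF).

Lemma sub_h (g : 'End(V)) U : Comm I beta rho g -> sub U -> sub (g @: U)%VS.
Proof.
move=> cg /subrep_iop sU; apply/subrep_iop => l lI.
have [l' l'I e] := cg l lI.
by rewrite -limg_comp e limg_comp limgS // sU.
Qed.

Lemma hhU U : (h' @: (h @: U) = U)%VS.
Proof. by rewrite -limg_comp hK lim1g. Qed.
Lemma hhU' U : (h @: (h' @: U) = U)%VS.
Proof. by rewrite -limg_comp hK' lim1g. Qed.

Lemma irr_h U : irr U -> irr (h @: U)%VS.
Proof.
case=> n0 sU mU; split.
- by move=> e; apply: n0; rewrite -(hhU U) e limg0.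
- exact: sub_h.
- move=> U' sU' U'h.
  have hs : (h' @: U' <= U)%VS by rewrite -(hhU U) limgS.
  case: (mU _ (sub_h ch' sU') hs) => e.
    by left; rewrite -(hhU' U') e limg0.
  by right; rewrite -(hhU' U') e.
Qed.

Lemma hker : lker h = 0%VS.
Proof.
apply/eqP/lker0P => x y e.
by rewrite -[x]id_lfunE -[y]id_lfunE -hK !comp_lfunE e.
Qed.

Lemma dim_h U : \dim (h @: U) = \dim U.
Proof. by rewrite limg_dim_eq // hker capv0. Qed.

Lemma transport (S S' : vectType k) (bS rS : T -> 'End(S)) (bS' rS' : T -> 'End(S'))
  (f1 f2 : 'Hom(S, V)) (g : 'Hom(S', V)) :
  intertwining_emb I bS rS beta rho f1 -> intertwining_emb I bS rS beta rho f2 ->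
  intertwining_emb I bS' rS' beta rho g -> limg g = (h @: limg f1)%VS ->
  subrep_equiv I beta rho bS' rS' (h @: limg f2)%VS.
Proof.
case=> k1 b1 r1 [k2 b2 r2] [kg bg rg] eg.
pose F := (h \o f2 \o f1^-1 \o h' \o g)%VF.
have inU1 : forall s, h' (g s) \in limg f1.
  by move=> s; rewrite -(hhU (limg f1)) -eg memv_img // memv_img ?memvf.
have Fg : forall s, f1 (f1^-1%VF (h' (g s))) = h' (g s).
  by move=> s; rewrite limg_lfunVK.
have Fl : forall l, inI I l -> (F \o iop bS' rS' l = iopV l \o F)%VF.
  move=> l lI; have [l' l'I e] := ch lI.
  have gl := intw_iop bg rg lI.
  have f1l := intw_iop b1 r1 l'I; have f2l := intw_iop b2 r2 l'I.
  apply/lfunP => s; rewrite !comp_lfunE.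
  have -> : g (iop bS' rS' l s) = iopV l (g s) by rewrite -comp_lfunE gl comp_lfunE.
  have -> : h' (iopV l (g s)) = iopV l' (h' (g s)).
    by rewrite -[X in h' (iopV l X)]id_lfunE -hK' !comp_lfunE -(comp_lfunE (iopV l)) e
      comp_lfunE -(comp_lfunE h' h) hK id_lfunE.
  rewrite -Fg -(comp_lfunE (iopV l')) -f1l comp_lfunE lker0_lfunK ?k1 //.
  rewrite -(comp_lfunE f2) f2l comp_lfunE -(comp_lfunE h) -e comp_lfunE.
  by rewrite Fg.
exists F; split; first split.
- apply/eqP/lker0P => x y.
  rewrite !comp_lfunE => e.
  have hi : injective h by apply/lker0P/eqP; exact: hker.
  have f2i : injective f2 by apply/lker0P/eqP; exact: k2.
  move/hi/f2i: e => e.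
  have : f1 (f1^-1%VF (h' (g x))) = f1 (f1^-1%VF (h' (g y))) by rewrite e.
  rewrite !Fg => e2.
  have gi : injective g by apply/lker0P/eqP; exact: kg.
  apply: gi.
  by rewrite -[g x]id_lfunE -[g y]id_lfunE -hK' !comp_lfunE e2.
- by move=> a aI; have := Fl [:: (true, a)]; rewrite /inI /= aI /iop /= /nop /= !comp_lfun1r; apply.
- by move=> a aI; have := Fl [:: (false, a)]; rewrite /inI /= aI /iop /= /nop /= !comp_lfun1r; apply.
- have e1 : (f1^-1%VF @: limg f1 = fullv)%VS.
    by rewrite -limg_comp lker0_compVf ?k1 // lim1g.
  by rewrite /F !limg_comp eg hhU e1.
Qed.
End Sub.

Section Step.
Variables (T : finType) (I : {set T}) (k : fieldType).
Variables (V : vectType k) (beta rho : T -> 'End(V)).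
Local Notation sub := (is_subrep I beta rho).
Local Notation irr := (is_irr_subrep I beta rho).

Lemma equiv_dim (S : vectType k) (bS rS : T -> 'End(S)) U :
  subrep_equiv I beta rho bS rS U -> \dim U = \dim (fullv : {vspace S}).
Proof. by case=> f [[kf _ _] <-]; rewrite limg_dim_eq // kf capv0. Qed.

Lemma equiv2 (S1 S2 : vectType k) (b1 r1 : T -> 'End(S1)) (b2 r2 : T -> 'End(S2)) U :
  subrep_equiv I beta rho b1 r1 U -> subrep_equiv I beta rho b2 r2 U ->
  rep_equiv I b1 r1 b2 r2.
Proof.
case=> f1 [[k1 hb1 hr1] e1] [f2 [[k2 hb2 hr2] e2]].
have inU : forall s, f1 s \in limg f2 by move=> s; rewrite e2 -e1 memv_img ?memvf.
have K : forall s, f2 (f2^-1%VF (f1 s)) = f1 s by move=> s; rewrite limg_lfunVK.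
have f1i : injective f1 by apply/lker0P/eqP.
have f2K := lker0_lfunK (introT eqP k2).
exists (f2^-1 \o f1)%VF; split.
- apply/eqP/lker0P => x y; rewrite !comp_lfunE => e.
  by apply: f1i; rewrite -K e K.
- have d1 : \dim U = \dim (fullv : {vspace S1}).
    by apply: (equiv_dim (bS := b1) (rS := r1)); exists f1.
  have d2 : \dim U = \dim (fullv : {vspace S2}).
    by apply: (equiv_dim (bS := b2) (rS := r2)); exists f2.
  have kF : (fullv :&: lker (f2^-1 \o f1)%VF = 0)%VS.
    apply/eqP; rewrite -subv0; apply/subvP => x.
    rewrite memv_cap memv0 memv_ker comp_lfunE => /andP[_ /eqP e].
    by apply/eqP/f1i; rewrite -K e !linear0.
  apply/eqP; rewrite eqEdim subvf /= limg_dim_eq // -d1 -d2 //.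
- move=> a aI; apply/lfunP => s; rewrite !comp_lfunE.
  have := congr1 (fun M : 'Hom(S1, V) => M s) (hb1 a aI); rewrite !comp_lfunE => ->.
  by rewrite -{1}(K s) -(comp_lfunE (beta a)) -(hb2 a aI) comp_lfunE f2K.
- move=> a aI; apply/lfunP => s; rewrite !comp_lfunE.
  have := congr1 (fun M : 'Hom(S1, V) => M s) (hr1 a aI); rewrite !comp_lfunE => ->.
  by rewrite -{1}(K s) -(comp_lfunE (rho a)) -(hr2 a aI) comp_lfunE f2K.
Qed.

Lemma step (S : vectType k) (bS rS : T -> 'End(S)) (f : 'Hom(S, V)) R Y U :
  sub R -> irr Y -> intertwining_emb I bS rS beta rho f -> limg f = Y ->
  irr U -> (U <= Y + R)%VS -> ~~ (U <= R)%VS ->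
  subrep_equiv I beta rho bS rS U.
Proof.
move=> sR iY [kf hbf hrf] ef iU UYR nUR.
have sU := irr_sub iU.
have UR0 : (U :&: R = 0)%VS.
  by case: (irr_cap iU sR) => // UR; rewrite UR in nUR.
have YR0 : (Y :&: R = 0)%VS.
  case: (irr_cap iY sR) => // YR; move: nUR.
  by rewrite (subv_trans UYR) //; move/addv_idPr: YR => ->.
have YUR : (Y <= U + R)%VS.
  case: (irr_cap iY (subD sU sR)) => // Y0.
  case/subvPn: nUR => u Uu nRu.
  have : u \in (Y + R)%VS by apply: (subvP UYR).
  case/memv_addP => y Yy [r' Rr' eu].
  have : y \in (Y :&: (U + R))%VS.
    rewrite memv_cap Yy /=.
    have -> : y = u + (- r') by rewrite eu addrK.
    by rewrite memv_add // memvN.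
  rewrite Y0 memv0 => /eqP y0.
  by rewrite eu y0 add0r Rr' in nRu.
pose q := daddv_pi U R; pose q' := daddv_pi R U.
have RU0 : (R :&: U = 0)%VS by rewrite capvC.
have qadd : forall z, z \in (U + R)%VS -> q z + q' z = z.
  by move=> z zUR; apply: daddv_pi_add.
have qU : forall u, u \in U -> q u = u by move=> u; apply: daddv_pi_id.
have qR : forall x, x \in R -> q x = 0.
  move=> x Rx; have := qadd x; rewrite (subvP (addvSr U R)) // => /(_ isT).
  by rewrite (daddv_pi_id RU0 Rx) => e; apply: (addIr x); rewrite e add0r.
have qcomm : forall n : 'End(V), (n @: U <= U)%VS -> (n @: R <= R)%VS ->
    forall z, z \in (U + R)%VS -> q (n z) = n (q z).
  move=> n nU nR z zUR; rewrite -{1}(qadd z zUR) !linearD /=.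
  rewrite (qU (n (q z))); last by apply: (subvP nU); apply: memv_img; apply: memv_pi.
  rewrite (qR (n (q' z))) ?addr0 //; apply: (subvP nR); apply: memv_img; apply: memv_pi.
have fY : forall s, f s \in (U + R)%VS.
  by move=> s; apply: (subvP YUR); rewrite -ef memv_img ?memvf.
have fi : injective f by apply/lker0P/eqP.
pose h := (q \o f)%VF.
have kh : lker h = 0%VS.
  apply/eqP/lker0P => x y; rewrite !comp_lfunE => e.
  apply: fi; apply/eqP; rewrite -subr_eq0 -linearB /=; apply/eqP.
  have : f (x - y) \in (Y :&: R)%VS.
    rewrite memv_cap -ef memv_img ?memvf //=.
    rewrite -(qadd _ (fY (x - y))) !linearB /= e subrr add0r.
    by rewrite memvB ?memv_pi.
  by rewrite YR0 memv0 linearB => /eqP.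
have hb : forall a, a \in I -> (h \o bS a)%VF = (beta a \o h)%VF.
  move=> a aI; apply/lfunP => s; rewrite !comp_lfunE.
  have := congr1 (fun M : 'Hom(S, V) => M s) (hbf a aI); rewrite !comp_lfunE => ->.
  by case: (sU a aI) => bU _; case: (sR a aI) => bR _; rewrite qcomm.
have hr : forall a, a \in I -> (h \o rS a)%VF = (rho a \o h)%VF.
  move=> a aI; apply/lfunP => s; rewrite !comp_lfunE.
  have := congr1 (fun M : 'Hom(S, V) => M s) (hrf a aI); rewrite !comp_lfunE => ->.
  by case: (sU a aI) => _ rU; case: (sR a aI) => _ rR; rewrite qcomm.
exists h; split; first by split.
have hU : (limg h <= U)%VS.
  apply/subvP => x /memv_imgP [s _ ->]; rewrite comp_lfunE; exact: memv_pi.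
case: iU => nU _ mU.
case: (mU _ (sub_img hb hr) hU) => // h0.
exfalso.
have := limg_ker_dim h fullv; rewrite kh capv0 dimv0 add0n h0 dimv0 => d0.
have := limg_ker_dim f fullv; rewrite kf capv0 dimv0 add0n -d0 ef => /eqP.
rewrite dimv_eq0 => /eqP Y0.
by case: iY.
Qed.

Section Good.
Variables (r : nat) (S : 'I_r -> vectType k) (bS rS : forall i, T -> 'End(S i)).

Definition Good (P : pred 'I_r) Z := sub Z /\ forall U, irr U -> (U <= Z)%VS ->
  exists2 c, P c & subrep_equiv I beta rho (bS c) (rS c) U.

Lemma Good0 P : Good P 0%VS.
Proof.
split; first exact: sub0.
by move=> U iU; rewrite subv0 => /eqP U0; case: iU.
Qed.

Lemma Good_add P R Y c : Good P R -> irr Y -> P c ->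
  subrep_equiv I beta rho (bS c) (rS c) Y -> Good P (Y + R)%VS.
Proof.
move=> [sR gR] iY Pc [f [fi ef]]; split; first exact: subD (irr_sub iY) sR.
move=> U iU UYR; case: (boolP (U <= R)%VS) => UR; first exact: gR.
by exists c => //; apply: step sR iY fi ef iU UYR UR.
Qed.
End Good.

Lemma greedy (X : eqType) (rs : seq X) (Y : X -> {vspace V}) :
  (forall x, irr (Y x)) ->
  exists l : seq X, \dim (\sum_(x <- l) Y x)%VS = (\sum_(x <- l) \dim (Y x))%N /\
     (\sum_(x <- l) Y x = \sum_(x <- rs) Y x)%VS.
Proof.
move=> iY; elim: rs => [|x rs [l [dl el]]]; first by exists [::]; rewrite !big_nil dimv0.
have sl : sub (\sum_(x <- l) Y x)%VS by apply: sub_sum => z _; apply: irr_sub.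
case: (irr_cap (iY x) sl) => [c0|xl].
  exists (x :: l); rewrite !big_cons el; split => //.
  by rewrite -el -dl -dimv_sum_cap c0 dimv0 addn0.
by exists l; rewrite big_cons -el; move/addv_idPr: xl => ->.
Qed.

Lemma greedy_ord (X : eqType) (rs : seq X) (Y : X -> {vspace V}) :
  (forall x, irr (Y x)) ->
  exists s (sg : 'I_s -> X), directv (\sum_(j < s) Y (sg j)) /\
     (\sum_(j < s) Y (sg j) = \sum_(x <- rs) Y x)%VS.
Proof.
move=> iY; have [l [dl el]] := greedy rs iY.
exists (size l), (tnth (in_tuple l)); rewrite directvE /=.
by rewrite -(big_tnth _ _ _ xpredT Y) -(big_tnth _ _ _ xpredT (fun x => \dim (Y x))) dl el.
Qed.
End Step.

Section Main.
Variables (T : finType) (B : skew_brace T) (k : fieldType) (I : {set T}).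
Hypothesis HI : is_ideal B I.
Variables (V : vectType k) (beta rho : T -> 'End(V)).
Hypothesis Hrep : is_rep B [set: T] beta rho.
Hypothesis Hirr : is_irreducible [set: T] beta rho.
Local Notation sub := (is_subrep I beta rho).
Local Notation irr := (is_irr_subrep I beta rho).
Local Notation ph := (phi beta rho).

Lemma phi1 : ph (done B, cone B) = \1%VF.
Proof. by rewrite /phi /= (b1 Hrep) (r1 Hrep) comp_lfun1l. Qed.

Lemma orbit_full (U : {vspace V}) : (U != 0)%VS ->
  (\sum_(g : T * T) ph g @: U)%VS = fullv.
Proof.
move=> nU; set O := (\sum_(g : T * T) ph g @: U)%VS.
have UO : (U <= O)%VS by rewrite (sumv_sup (done B, cone B)) // phi1 lim1g.
have sO : is_subrep [set: T] beta rho O.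
  move=> a _; split; rewrite limg_sum; apply/subv_sumP => g _; rewrite -limg_comp.
  - apply: (sumv_sup (dot B a g.1, g.2)) => //.
    by rewrite /phi /= (bD Hrep) comp_lfunA subvv.
  - apply: (sumv_sup (lamop B a g.1, circ B a g.2)) => //.
    by rewrite /phi /= (rD Hrep) !comp_lfunA (rb Hrep) subvv.
case: Hirr => _ h; case: (h O sO) => // O0.
by move: UO; rewrite O0 subv0 (negPf nU).
Qed.

Lemma irr_phi g U : irr U -> irr (ph g @: U)%VS.
Proof.
exact: (irr_h (Comm_phi HI Hrep g) (Comm_phiV HI Hrep g) (phiVK Hrep g) (phiKV Hrep g)).
Qed.

Lemma compl_red : completely_reducible I beta rho.
Proof.
have sF : sub fullv by move=> a _; rewrite !subvf.
have nF : (fullv : {vspace V}) != 0%VS by case: Hirr => h _; apply/eqP.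
have [U0 [iU0 _]] := minimal' sF nF.
have [s [sg [dx e]]] := greedy_ord (index_enum _) (fun g => irr_phi g iU0).
exists s, (fun j => ph (sg j) @: U0)%VS; split => //.
- by move=> j; apply: irr_phi.
- by rewrite e; exact: (orbit_full (irr_neq0 iU0)).
Qed.

Section Comps.
Variables (r : nat) (S : 'I_r -> vectType k) (bS rS : forall i, T -> 'End(S i)).
Hypothesis Hne : forall i j, i != j -> ~ rep_equiv I (bS i) (rS i) (bS j) (rS j).
Hypothesis Hcov : forall U, irr U -> exists i, subrep_equiv I beta rho (bS i) (rS i) U.
Hypothesis Hex : forall i, exists U, irr U /\ subrep_equiv I beta rho (bS i) (rS i) U.
Variable W : 'I_r -> {vspace V}.
Hypothesis HW : forall i, is_homog_component I beta rho (bS i) (rS i) (W i).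

Local Notation Good := (Good I beta rho bS rS).

Lemma Good_sumX (P : pred 'I_r) R t (X : 'I_t -> {vspace V}) :
  (forall j, irr (X j)) ->
  (forall j, exists2 c, P c & subrep_equiv I beta rho (bS c) (rS c) (X j)) ->
  Good P R -> Good P (\sum_(j < t) X j + R)%VS.
Proof.
move=> iX eX gR; elim/big_rec: _ => [|j x _ gx]; first by rewrite add0v.
have [c Pc ec] := eX j; rewrite -addvA; exact: Good_add gx (iX j) Pc ec.
Qed.

Lemma GoodW i : Good (pred1 i) (W i).
Proof.
case: (HW i) => _ [t [X [hX ->]]]; rewrite -[X in Good _ X]addv0.
apply: Good_sumX; [by move=> j; case: (hX j) | | exact: Good0].
move=> j; exists i; first exact: eqxx. by case: (hX j).
Qed.

Lemma GoodWo i : Good (fun c => c != i) (\sum_(j | j != i) W j)%VS.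
Proof.
elim/big_rec: _ => [|j x ji gx]; first exact: Good0.
case: (HW j) => _ [t [X [hX ->]]].
apply: Good_sumX => //; first by move=> l; case: (hX l).
by move=> l; exists j => //; case: (hX l) => _ ?.
Qed.

Lemma W_neq0 i : (W i != 0)%VS.
Proof.
have [U [iU eU]] := Hex i; case: (HW i) => h _.
by apply: contraTneq (h U iU eU) => ->; rewrite subv0 (irr_neq0 iU).
Qed.

Lemma Wcap i : (W i :&: \sum_(j | j != i) W j = 0)%VS.
Proof.
apply/eqP; apply: contraT => nZ.
have [[s1 g1] [s2 g2]] := (GoodW i, GoodWo i).
have [U [iU UZ]] := minimal' (subI s1 s2) nZ.
have [c1 /eqP -> e1] := g1 U iU (subv_trans UZ (capvSl _ _)).
have [c2 c2i e2] := g2 U iU (subv_trans UZ (capvSr _ _)).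
by exfalso; apply: (Hne (i := i) (j := c2)); [rewrite eq_sym | apply: equiv2 e1 e2].
Qed.

Lemma Wdirect : directv (\sum_(i < r) W i).
Proof.
apply/directv_sumP => i _; exact: Wcap i.
Qed.

Lemma Wfull : (\sum_(i < r) W i)%VS = fullv.
Proof.
apply/eqP; rewrite eqEsubv subvf /=.
have [s [U [iU _ <-]]] := compl_red.
apply/subv_sumP => j _; have [c ec] := Hcov (iU j).
by apply: (sumv_sup c) => //; case: (HW c) => h _; apply: h.
Qed.

Lemma Wmult i : exists m, is_multiple I beta rho (bS i) (rS i) (W i) m.
Proof.
case: (HW i) => _ [t [X [hX eW]]].
have [s [sg [dx e]]] := greedy_ord (index_enum _) (fun j => proj1 (hX j)).
have : forall j : 'I_s, exists f : 'Hom(S i, V),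
    intertwining_emb I (bS i) (rS i) beta rho f /\ limg f = X (sg j).
  by move=> j; case: (hX (sg j)) => _ [f hf]; exists f.
case/fin_all_exists => F hF; exists s, F.
have eF : (\sum_(j < s) limg (F j) = \sum_(j < s) X (sg j))%VS.
  by apply: eq_bigr => j _; case: (hF j).
split; first by move=> j; case: (hF j).
- have eD : (\sum_(j < s) \dim (limg (F j)) = \sum_(j < s) \dim (X (sg j)))%N.
    by apply: eq_bigr => j _; case: (hF j) => _ ->.
  by move: dx; rewrite !directvE /= eF eD.
- by rewrite eF e eW.
Qed.

Lemma img_sub (h h' : 'End(V)) : Comm I beta rho h -> Comm I beta rho h' ->
  (h' \o h = \1)%VF -> (h \o h' = \1)%VF ->
  forall i, exists j, (h @: W i <= W j)%VS.
Proof.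
move=> ch ch' hK hK' i.
case: (HW i) => _ [t [X [hX eW]]].
case: t X hX eW => [|t] X hX eW.
  by exists i; rewrite eW big_ord0 limg0 sub0v.
case: (hX ord0) => iX0 [f0 [fi0 ef0]].
have iY := irr_h ch ch' hK hK' iX0.
have [j [g0 [gi eg]]] := Hcov iY.
exists j; rewrite eW limg_sum; apply/subv_sumP => l _.
case: (hX l) => iXl [fl [fil efl]].
have eq := transport ch hK hK' fi0 fil gi (etrans eg (congr1 _ (esym ef0))).
case: (HW j) => hj _; rewrite -efl; apply: hj eq.
rewrite efl; exact: (irr_h ch ch' hK hK' iXl).
Qed.

Lemma img_eq (h h' : 'End(V)) : Comm I beta rho h -> Comm I beta rho h' ->
  (h' \o h = \1)%VF -> (h \o h' = \1)%VF ->
  forall i, exists j, (h @: W i = W j)%VS.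
Proof.
move=> ch ch' hK hK' i.
have [j hij] := img_sub ch ch' hK hK' i.
have [i' hji] := img_sub ch' ch hK' hK j.
have Wii : (W i <= W i')%VS.
  apply: subv_trans hji; rewrite -[X in (X <= _)%VS]lim1g -hK limg_comp.
  exact: limgS.
have ii : i' = i.
  case: (eqVneq i' i) => // ne; exfalso.
  have : (W i <= W i :&: \sum_(l | l != i) W l)%VS.
    by rewrite subv_cap subvv /=; apply: (sumv_sup i').
  by rewrite Wcap subv0 (negPf (W_neq0 i)).
rewrite ii in hji; exists j; apply/eqP; rewrite eqEsubv hij /=.
rewrite -[X in (X <= _)%VS]lim1g -hK' limg_comp; exact: limgS.
Qed.

Lemma phi_eq g i : exists j, (ph g @: W i = W j)%VS.
Proof.
exact: img_eq (Comm_phi HI Hrep g) (Comm_phiV HI Hrep g) (phiVK Hrep g) (phiKV Hrep g) i.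
Qed.

Lemma phi_trans i j : exists g, (ph g @: W i = W j)%VS.
Proof.
apply: NNPP => hn.
have O := orbit_full (W_neq0 i).
have : (W j <= \sum_(l | l != j) W l)%VS.
  apply: subv_trans (subvf _) _; rewrite -O.
  apply/subv_sumP => g _; have [l el] := phi_eq g i.
  rewrite el; apply: (sumv_sup l) => //.
  by apply/eqP => lj; apply: hn; exists g; rewrite el lj.
move/capv_idPl; rewrite Wcap => e.
by move: (W_neq0 j); rewrite e eqxx.
Qed.

Lemma dim_mult i m : is_multiple I beta rho (bS i) (rS i) (W i) m ->
  \dim (W i) = (m * \dim (fullv : {vspace S i}))%N.
Proof.
case=> f [fi dx <-]; move: dx; rewrite directvE /= => /eqP ->.
rewrite (eq_bigr (fun _ => \dim (fullv : {vspace S i}))).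
  by rewrite big_const_ord iter_addn_0 mulnC.
by move=> j _; case: (fi j) => kf _ _; rewrite limg_dim_eq // kf capv0.
Qed.

Lemma dimS_eq i j : \dim (fullv : {vspace S i}) = \dim (fullv : {vspace S j}).
Proof.
have [g eg] := phi_trans i j.
have [U [iU eU]] := Hex i.
have UW : (U <= W i)%VS by case: (HW i) => h _; apply: h.
have iY := irr_phi g iU.
have YW : (ph g @: U <= W j)%VS by rewrite -eg limgS.
have [c /eqP ce e'] := (GoodW j).2 _ iY YW.
rewrite ce in e'.
rewrite -(equiv_dim eU) -(equiv_dim e').
by rewrite (dim_h (phiVK Hrep g)).
Qed.

Lemma dimS_pos i : (0 < \dim (fullv : {vspace S i}))%N.
Proof.
have [U [iU eU]] := Hex i.
by rewrite -(equiv_dim eU) lt0n dimv_eq0 (irr_neq0 iU).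
Qed.

Lemma dimW_eq i j : \dim (W i) = \dim (W j).
Proof.
have [g <-] := phi_trans i j.
by rewrite (dim_h (phiVK Hrep g)).
Qed.

Lemma mult_eq (m : 'I_r -> nat) :
  (forall i, is_multiple I beta rho (bS i) (rS i) (W i) (m i)) ->
  forall i j, m i = m j.
Proof.
move=> hm i j; have := dimW_eq i j.
rewrite (dim_mult (hm i)) (dim_mult (hm j)) (dimS_eq i j) => /eqP.
by rewrite eqn_mul2r eqn0Ngt dimS_pos /= => /eqP.
Qed.
End Comps.
End Main.
Theorem theorem3p4 (T : finType) (B : skew_brace T) (k : fieldType)
  (I : {set T}) (HI : is_ideal B I)
  (V : vectType k) (beta rho : T -> 'End(V))
  (Hrep : is_rep B [set: T] beta rho)
  (Hirr : is_irreducible [set: T] beta rho) :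
  (* the restriction to I is completely reducible *)
  completely_reducible I beta rho /\
  (* for any list S_1, ..., S_r of pairwise non-equivalent irreducible
     representations of I, representing exactly the equivalence types of the
     irreducible I-subrepresentations of V, with homogeneous components W_i: *)
  forall (r : nat) (S : 'I_r -> vectType k) (bS rS : forall i, T -> 'End(S i)),
    (forall i, is_rep B I (bS i) (rS i)) ->
    (forall i, is_irreducible I (bS i) (rS i)) ->
    (forall i j, i != j -> ~ rep_equiv I (bS i) (rS i) (bS j) (rS j)) ->
    (forall U, is_irr_subrep I beta rho U ->
       exists i, subrep_equiv I beta rho (bS i) (rS i) U) ->
    (forall i, exists U, is_irr_subrep I beta rho U /\
       subrep_equiv I beta rho (bS i) (rS i) U) ->
    forall W : 'I_r -> {vspace V},
    (forall i, is_homog_component I beta rho (bS i) (rS i) (W i)) ->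
    (* V = W_1 (+) ... (+) W_r *)
    [/\ directv (\sum_(i < r) W i) /\ (\sum_(i < r) W i)%VS = fullv,
    (* W_i = S_i^{(+) m_i} for some m_i *)
        (exists m : 'I_r -> nat,
           forall i, is_multiple I beta rho (bS i) (rS i) (W i) (m i)),
    (* (a) Lambda_A permutes the W_i transitively *)
        (forall (g : T * T) i, exists j, (phi beta rho g @: W i)%VS = W j),
        (forall i j, exists g : T * T, (phi beta rho g @: W i)%VS = W j) &
    (* (b) equal multiplicities and equal dimensions *)
        (forall m : 'I_r -> nat,
           (forall i, is_multiple I beta rho (bS i) (rS i) (W i) (m i)) ->
           forall i j, m i = m j) /\
        (forall i j, \dim (fullv : {vspace S i}) = \dim (fullv : {vspace S j}))].
Proof.
split. { have := compl_red HI Hrep Hirr. exact. }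
move=> r S bS rS _ _ Hne Hcov Hex W HW.
split.
- split. { have := Wdirect Hne HW. exact. } { have := Wfull HI Hrep Hirr Hcov HW. exact. }
- exact: fin_all_exists (Wmult HW).
- move=> g i. have := phi_eq HI Hrep Hne Hcov Hex HW g i. exact.
- move=> i j. have := phi_trans HI Hrep Hirr Hne Hcov Hex HW i j. exact.
- split. { have := mult_eq HI Hrep Hirr Hne Hcov Hex HW. exact. }
  { have := dimS_eq HI Hrep Hirr Hne Hcov Hex HW. exact. }
Qed.
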